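(* Let $\mathcal{A}$ be an Ershov $\mathcal{C}$-algebra. Any system of equations $S(\bar{x})$ in variables $\bar{x}$ over $\mathcal{A}$ is equivalent over $\mathcal{A}$ to a system consisting of equations, each of one of the following forms: $$x_{i_1} \wedge \ldots \wedge x_{i_m} \wedge c \leq x_{j_1} \vee \ldots \vee x_{j_l},$$ $$x_{i_1} \wedge \ldots \wedge x_{i_m} \wedge c = 0 \quad (\text{when there are no variables on the right-hand side}),$$ $$x_{i_1} \wedge \ldots \wedge x_{i_m} \leq x_{j_1} \vee \ldots \vee x_{j_l} \vee c,$$ $$x_{i_1} \wedge \ldots \wedge x_{i_m} \leq x_{j_1} \vee \ldots \vee x_{j_l},$$ where $x_{i_1},\dots,x_{i_m},x_{j_1},\dots,x_{j_l}$ are variables from $\bar x$, the variable symbols on the two sides of each equation are all different, and $c \in \mathcal{C}$ with $c > 0$.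
   Context: An Ershov algebra is a structure $\langle A; \vee, \wedge, \setminus, 0\rangle$ such that $\langle A;\vee,\wedge\rangle$ is a distributive lattice with least element $0$, and $b \setminus a$ is the relative complement: the unique $z$ with $z \wedge a = 0$ and $z \vee a = a \vee b$. An Ershov $\mathcal{C}$-algebra is an Ershov algebra $\mathcal{A}$ together with a distinguished subalgebra $\mathcal{C}$ whose elements are added as constant symbols; $\mathcal{L}$ is the language $\{\vee,\wedge,\setminus,0\}$ plus these constants. An equation is $t(\bar x)=s(\bar x)$ with $t,s$ terms of $\mathcal{L}$; an inequality $t \le s$ is regarded as the equation $t \vee s = s$. A system of equations is any (possibly infinite) set of equations; two systems are equivalent over $\mathcal{A}$ if they have the same solution set in $A^n$. *)

(* Defs.v *)
(* An Ershov algebra is a (sectionally) relatively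
   complemented distributive lattice with bottom: mathcomp's
   [cbDistrLatticeType], with join `|`, meet `&`, bottom \bot = 0 and
   difference x `\` y (the complement of y relative to [\bot, x \/ y]). *)
From HB Require Import structures.
From mathcomp Require Import all_boot all_order.
Set Implicit Arguments. Unset Strict Implicit. Unset Printing Implicit Defensive.
Import Order.TTheory.
Local Open Scope order_scope.

Section ErshovTerms.
Variables (disp : Order.disp_t) (A : cbDistrLatticeType disp) (n : nat).

Inductive term : Type :=
  | Var of 'I_n
  | Const of A
  | Zero
  | Join of term & term
  | Meet of term & term
  | Diff of term & term.

Fixpoint eval (v : 'I_n -> A) (t : term) : A :=
  match t with
  | Var i => v i
  | Const c => c
  | Zero => \bot
  | Join t s => eval v t `|` eval v s
  | Meet t s => eval v t `&` eval v s
  | Diff t s => eval v t `\` eval v s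
  end.

Fixpoint consts_in (C : A -> Prop) (t : term) : Prop :=
  match t with
  | Var _ | Zero => True
  | Const c => C c
  | Join t s | Meet t s | Diff t s => consts_in C t /\ consts_in C s
  end.

Definition equation := (term * term)%type.

Definition eqn_in_L (C : A -> Prop) (e : equation) : Prop :=
  consts_in C e.1 /\ consts_in C e.2.

Definition ineq (t s : term) : equation := (Join t s, s).

Definition satisfies (v : 'I_n -> A) (e : equation) : Prop :=
  eval v e.1 = eval v e.2.

Definition system := equation -> Prop.

Definition solves (v : 'I_n -> A) (S : system) : Prop :=
  forall e, S e -> satisfies v e.

Definition equivalent_systems (S S' : system) : Prop :=
  forall v : 'I_n -> A, solves v S <-> solves v S'.

Definition meet_vars (base : term) (s : seq 'I_n) : term :=
  foldr (fun i t => Meet (Var i) t) base s.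
Definition join_vars (base : term) (s : seq 'I_n) : term :=
  foldr (fun j t => Join (Var j) t) base s.

(* The four admissible forms; I lists the left variables, J the right ones,
   and all variable symbols on both sides are distinct (uniq (I ++ J)).
   (1) x_I /\ c <= x_J          (J nonempty, m = |I| >= 0)
   (2) x_I /\ c = 0             (no variable on the right)
   (3) x_I <= x_J \/ c          (I nonempty)
   (4) x_I <= x_J               (I nonempty; empty join is 0)
   with c in C and c > 0. *)
Definition normal_eqn (C : A -> Prop) (e : equation) : Prop :=
  (exists (I J : seq 'I_n) (c : A), uniq (I ++ J) /\ C c /\ \bot < c /\
      J != [::] /\ e = ineq (meet_vars (Const c) I) (join_vars Zero J))
  \/ (exists (I : seq 'I_n) (c : A), uniq I /\ C c /\ \bot < c /\
      e = (meet_vars (Const c) I, Zero))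
  \/ (exists (i : 'I_n) (I J : seq 'I_n) (c : A), uniq ((i :: I) ++ J) /\ C c
      /\ \bot < c /\ e = ineq (meet_vars (Var i) I) (join_vars (Const c) J))
  \/ (exists (i : 'I_n) (I J : seq 'I_n), uniq ((i :: I) ++ J) /\
      e = ineq (meet_vars (Var i) I) (join_vars Zero J)).

End ErshovTerms.

Definition ershov_subalgebra (disp : Order.disp_t) (A : cbDistrLatticeType disp)
    (C : A -> Prop) : Prop :=
  C \bot /\ (forall a b, C a -> C b -> C (a `|` b)) /\
  (forall a b, C a -> C b -> C (a `&` b)) /\
  (forall a b, C a -> C b -> C (a `\` b)).

(* Main.v *)
Require Import Defs.
From HB Require Import structures.
From mathcomp Require Import all_boot all_order zify.
Set Implicit Arguments. Unset Strict Implicit. Unset Printing Implicit Defensive.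
Import Order.Theory.
Local Open Scope order_scope.

Section Lat.
Variables (disp : Order.disp_t) (A : cbDistrLatticeType disp).
Implicit Types (a b t s R : A).

Lemma disjD a b : a `&` b == \bot -> a `\` b = a.
Proof. by move=> h; apply/eqP; rewrite eq_diff lexx leUr h. Qed.

Variable L : A -> Prop.
Hypothesis hL : forall a b, b <= a -> L a -> L b.

Lemma rule_ljoin t s R :
  (forall a, L a -> a <= t `|` s -> a <= R) <->
  (forall a, L a -> a <= t -> a <= R) /\ (forall a, L a -> a <= s -> a <= R).
Proof.
split.
- by move=> H; split=> a La h; apply: H La _; [exact: lexUl | exact: lexUr].
- move=> [H1 H2] a La h.
  have -> : a = (a `&` t) `|` (a `&` s) by rewrite -meetUr meet_l.
  rewrite leUx H1 ?H2 ?leIr //; apply: hL La; exact: leIl.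
Qed.

Lemma rule_ldiff t s R :
  (forall a, L a -> a <= t `\` s -> a <= R) <->
  (forall a, L a -> a <= t -> a <= s `|` R).
Proof.
split.
- move=> H a La h; rewrite -leBLR; apply: H; first by apply: hL La; exact: leBx.
  exact: leBl.
- move=> H a La h; have ht : a <= t := le_trans h (leBx _ _).
  have := H a La ht; rewrite -leBLR disjD //.
  by move: h; rewrite leBRL => /andP[].
Qed.

Lemma rule_rmeet t s R :
  (forall a, L a -> a <= (t `&` s) `|` R) <->
  (forall a, L a -> a <= t `|` R) /\ (forall a, L a -> a <= s `|` R).
Proof.
split.
- by move=> H; split=> a La; have := H a La; rewrite joinIl lexI => /andP[].
- by move=> [H1 H2] a La; rewrite joinIl lexI H1 ?H2.
Qed.

Lemma rule_rdiff t s R :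
  (forall a, L a -> a <= (t `\` s) `|` R) <->
  (forall a, L a -> a <= t `|` R) /\ (forall a, L a -> a <= s -> a <= R).
Proof.
split.
- move=> H; split=> a La.
  + apply: (le_trans (H a La)); rewrite leUx leUr andbT; apply: lexUl; exact: leBx.
  + move=> has; have := H a La; rewrite -leBLR disjD //.
    rewrite -lex0 -(diffKI t s) lexI leIr andbT; apply: le_trans has; exact: leIl.
- move=> [H1 H2] a La; rewrite -[a](joinIB s) leUx; apply/andP; split.
  + apply: lexUr; apply: H2; [apply: hL La; exact: leIl | exact: leIr].
  + by rewrite leBLR joinA diffKU -joinA; apply: lexUr; exact: H1.
Qed.
End Lat.

Section Main.
Variables (disp : Order.disp_t) (A : cbDistrLatticeType disp) (C : A -> Prop).
Hypothesis hC : ershov_subalgebra C.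
Variable n : nat.
Implicit Types (v : 'I_n -> A) (I J : seq 'I_n) (cs ds : seq A) (G D : seq (term A n)).

Definition jn (xs : seq A) := foldr Order.join \bot xs.
Lemma jn_cat xs ys : jn (xs ++ ys) = jn xs `|` jn ys.
Proof. by elim: xs => [|x xs IH] /=; rewrite ?join0x // IH joinA. Qed.
Lemma jn_ub x xs : x \in xs -> x <= jn xs.
Proof.
elim: xs => [|y xs IH] //=; rewrite in_cons => /orP[/eqP->|/IH h]; first exact: leUl.
exact: lexUr.
Qed.

Definition LB v I cs G a := all (fun x => a <= x) (map v I ++ cs ++ map (eval v) G).
Definition RJ v J ds D := jn (map v J ++ ds ++ map (eval v) D).
Definition holds v I cs G J ds D := forall a, LB v I cs G a -> a <= RJ v J ds D.

Lemma LB_cons v I cs t G a : LB v I cs (t :: G) a = (a <= eval v t) && LB v I cs G a.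
Proof.
rewrite /LB !all_cat /=.
by case: (a <= eval v t); rewrite /= ?andbF.
Qed.
Lemma LB_var v I cs i G a : LB v (i :: I) cs G a = (a <= v i) && LB v I cs G a.
Proof. by []. Qed.
Lemma LB_const v I cs c G a : LB v I (c :: cs) G a = (a <= c) && LB v I cs G a.
Proof. rewrite /LB !all_cat /=. by case: (a <= c); rewrite /= ?andbF. Qed.
Lemma LB_down v I cs G a b : b <= a -> LB v I cs G a -> LB v I cs G b.
Proof. by move=> ba /allP H; apply/allP => x /H; exact: le_trans. Qed.

Lemma RJ_cons v J ds t D : RJ v J ds (t :: D) = eval v t `|` RJ v J ds D.
Proof. by rewrite /RJ !jn_cat /= (joinCA (jn ds)) joinCA. Qed.
Lemma RJ_var v J ds j D : RJ v (j :: J) ds D = v j `|` RJ v J ds D.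
Proof. by []. Qed.
Lemma RJ_const v J ds d D : RJ v J (d :: ds) D = d `|` RJ v J ds D.
Proof. by rewrite /RJ !jn_cat /= -joinA joinCA. Qed.

Lemma holds_consL v I cs t G J ds D :
  holds v I cs (t :: G) J ds D <->
  (forall a, LB v I cs G a -> a <= eval v t -> a <= RJ v J ds D).
Proof.
rewrite /holds; split=> H a.
- by move=> h1 h2; apply: H; rewrite LB_cons h1 h2.
- by rewrite LB_cons => /andP[h1 h2]; apply: H.
Qed.

Definition Good (P : ('I_n -> A) -> Prop) :=
  exists N : system A n, (forall e, N e -> normal_eqn C e) /\ forall v, P v <-> solves v N.

Lemma Good_iff (P Q : ('I_n -> A) -> Prop) :
  (forall v, P v <-> Q v) -> Good Q -> Good P.
Proof. by move=> h [N [h1 h2]]; exists N; split=> // v; rewrite h. Qed.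
Lemma Good_and (P Q : ('I_n -> A) -> Prop) :
  Good P -> Good Q -> Good (fun v => P v /\ Q v).
Proof.
move=> [N1 [a1 b1]] [N2 [a2 b2]]; exists (fun e => N1 e \/ N2 e); split.
- by move=> e [/a1|/a2].
- move=> v; rewrite b1 b2; split.
  + by move=> [h1 h2] e [/h1|/h2].
  + by move=> h; split=> e he; apply: h; [left|right].
Qed.
Lemma Good_true (P : ('I_n -> A) -> Prop) : (forall v, P v) -> Good P.
Proof. by move=> h; exists (fun _ => False); split=> // v; split=> // _ e. Qed.

Fixpoint tsize (t : term A n) : nat :=
  match t with
  | Join t s | Meet t s | Diff t s => (tsize t + tsize s).+1
  | _ => 1
  end.
Definition msr G D := (sumn (map tsize G) + sumn (map tsize D))%N.
Lemma tsize_gt0 t : (0 < tsize t)%N. Proof. by case: t. Qed.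

Definition CT G := forall t, List.In t G -> consts_in C t.
Definition Cs cs := forall c, c \in cs -> C c.
Lemma CT_cons t G : CT (t :: G) <-> consts_in C t /\ CT G.
Proof.
split; first by move=> h; split=> [|u hu]; apply: h; [left|right].
by move=> [h1 h2] u /= [<-|/h2].
Qed.
Lemma Cs_cons c cs : Cs (c :: cs) <-> C c /\ Cs cs.
Proof.
split; first by move=> h; split=> [|u hu]; apply: h; rewrite in_cons ?eqxx ?hu ?orbT.
by move=> [h1 h2] u; rewrite in_cons => /orP[/eqP->|/h2].
Qed.

Lemma C0 : C \bot. Proof. by case: hC. Qed.
Lemma CU a b : C a -> C b -> C (a `|` b). Proof. by case: hC => _ [hU [hI hD]]; apply: hU. Qed.
Lemma CI a b : C a -> C b -> C (a `&` b). Proof. by case: hC => _ [hU [hI hD]]; apply: hI. Qed.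
Lemma CD a b : C a -> C b -> C (a `\` b). Proof. by case: hC => _ [hU [hI hD]]; apply: hD. Qed.
Lemma C_jn ds : Cs ds -> C (jn ds).
Proof.
elim: ds => [|d ds IH] /=; first by move=> _; exact: C0.
by move/Cs_cons => [h1 h2]; apply: CU => //; exact: IH.
Qed.
Lemma C_mn c cs : Cs (c :: cs) -> C (foldr Order.meet c cs).
Proof.
elim: cs => [|d ds IH] /=; first by move/Cs_cons => [].
move=> h; apply: CI.
- by apply: h; rewrite !in_cons eqxx orbT.
- apply: IH => u; rewrite in_cons => /orP[/eqP->|hu]; apply: h.
  + by rewrite in_cons eqxx.
  + by rewrite !in_cons hu !orbT.
Qed.

Lemma le_meet_vars v base I a :
  (a <= eval v (meet_vars base I)) = (a <= eval v base) && all (fun i => a <= v i) I.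
Proof.
elim: I => [|i I IH] /=; first by rewrite andbT.
by rewrite lexI IH andbCA.
Qed.

Lemma eval_join_vars v base J : eval v (join_vars base J) = jn (map v J) `|` eval v base.
Proof. elim: J => [|j J IH] /=; first by rewrite join0x. by rewrite IH joinA. Qed.

Lemma meet_vars_diff v c d I :
  eval v (meet_vars (Const n (c `\` d)) I) = eval v (meet_vars (Const n c) I) `\` d.
Proof. elim: I => //= i I IH; by rewrite IH meetxB. Qed.

Lemma le_mn a c cs : (a <= foldr Order.meet c cs) = all (fun x => a <= x) (c :: cs).
Proof.
elim: cs => [|x cs IH] /=; first by rewrite andbT.
by rewrite lexI IH /= andbCA.
Qed.

Lemma jn_undup v J : jn (map v (undup J)) = jn (map v J).
Proof.
elim: J => [|j J IH] //=; case: ifP => hj /=; rewrite IH //.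
by apply/esym/eqP; rewrite -leEjoin; apply: jn_ub; exact: map_f.
Qed.

Lemma all_undup_eq (P : pred 'I_n) I : all P (undup I) = all P I.
Proof. exact: (eq_all_r (mem_undup I)). Qed.

Lemma sat_ineq v t s : satisfies v (ineq t s) <-> eval v t <= eval v s.
Proof.
rewrite /satisfies /=; split=> h; first by rewrite leEjoin h.
by apply/eqP; rewrite -leEjoin.
Qed.

Lemma solves1 v E : solves v (fun e => e = E) <-> satisfies v E.
Proof. by split=> [h|h e ->]; [exact: h|]. Qed.

Lemma holds_atom v I cs J ds :
  holds v I cs [::] J ds [::] <->
  forall a, all (fun i => a <= v i) I -> all (fun x => a <= x) cs ->
            a <= jn (map v J) `|` jn ds.
Proof.
rewrite /holds /LB /RJ !cats0 jn_cat; split=> H a.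
- by move=> h1 h2; apply: H; rewrite all_cat all_map; apply/andP; split.
- by rewrite all_cat all_map => /andP[h1 h2]; apply: H.
Qed.

Lemma le_iff (P : A -> Prop) M Y : (forall a, P a <-> a <= M) ->
  (forall a, P a -> a <= Y) <-> M <= Y.
Proof.
move=> hP; split=> [H|H a /hP h]; last exact: le_trans h H.
by apply: H; apply/hP.
Qed.

Lemma atomic I cs J ds : Cs cs -> Cs ds -> (I != [::]) || (cs != [::]) ->
  Good (fun v => holds v I cs [::] J ds [::]).
Proof.
move=> hcs hds hne.
case: (boolP (has (fun i => i \in J) I)) => [hhas | hnh].
  apply: Good_true => v; apply/holds_atom => a h1 _.
  case/hasP: hhas => i iI iJ; apply: (le_trans (y := v i)).
    by move/allP: h1 => /(_ i iI).
  by apply: lexUl; apply: jn_ub; exact: map_f.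
have huq : uniq (undup I ++ undup J).
  rewrite cat_uniq !undup_uniq andbT /=.
  apply/hasP => [[j jJ jI]]; apply: (negP hnh); apply/hasP; exists j.
  - by rewrite -mem_undup.
  - by rewrite -mem_undup.
case: cs hcs hne => [|c0 cs] hcs hne.
  move: hne; rewrite orbF => hI.
  case hU: (undup I) => [|i I''].
    by move/undup_nil: hU => hI0; rewrite hI0 in hI.
  rewrite hU in huq.
  set d := jn ds.
  set base := if d == \bot then Zero A n else Const n d.
  have ebase : forall v, eval v base = d by move=> v; rewrite /base; case: eqP.
  exists (fun e => e = ineq (meet_vars (Var A i) I'') (join_vars base (undup J))).
  split.
    move=> e ->; rewrite /base; case: eqP => hd.
      by right; right; right; exists i, I'', (undup J).
    right; right; left; exists i, I'', (undup J), d; split=> //; split.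
      exact: C_jn.
    by split=> //; rewrite lt0x; apply/eqP.
  move=> v; rewrite holds_atom solves1 sat_ineq eval_join_vars ebase jn_undup.
  have key : forall a, (a <= eval v (meet_vars (Var A i) I'')) = all (fun i => a <= v i) I.
    by move=> a; rewrite le_meet_vars -(all_undup_eq _ I) hU.
  rewrite -(le_iff (P := fun a => all (fun i => a <= v i) I)); last by move=> a; rewrite key.
  by split=> H a h; [exact: H | move=> _; exact: H].
set c := foldr Order.meet c0 cs.
have Cc : C c by exact: C_mn.
set d := jn ds.
have Cd : C d by exact: C_jn.
have keyc : forall v a, (a <= eval v (meet_vars (Const n c) (undup I))) =
    all (fun i => a <= v i) I && all (fun x => a <= x) (c0 :: cs).
  by move=> v a; rewrite le_meet_vars all_undup_eq /= le_mn andbC.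
have hold_iff : forall v, holds v I (c0 :: cs) [::] J ds [::] <->
    eval v (meet_vars (Const n (c `\` d)) (undup I)) <= jn (map v J).
  move=> v; rewrite holds_atom meet_vars_diff leBLR joinC.
  rewrite -(le_iff (P := fun a => all (fun i => a <= v i) I && all (fun x => a <= x) (c0 :: cs))); last by move=> a; rewrite keyc.
  by split=> H a; [move=> /andP[h1 h2]; apply: H | move=> h1 h2; apply: H; rewrite h1 h2].
case: (eqVneq (c `\` d) \bot) => hcd.
  apply: Good_true => v; apply/hold_iff; rewrite hcd.
  elim: (undup I) => [|i I' IH] /=; first exact: le0x.
  exact: le_trans (leIr _ _) IH.
have Cc' : C (c `\` d) by exact: CD.
have pc' : \bot < c `\` d by rewrite lt0x.
case hJ: (undup J) => [|j J''].
  exists (fun e => e = (meet_vars (Const n (c `\` d)) (undup I), Zero A n)); split.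
    move=> e ->; right; left; exists (undup I), (c `\` d); split=> //.
    by move: huq; rewrite hJ cats0.
  move=> v; rewrite hold_iff solves1 /satisfies /=.
  move/undup_nil: hJ => -> /=; rewrite lex0; split; [by move/eqP|by move=> ->].
exists (fun e => e = ineq (meet_vars (Const n (c `\` d)) (undup I)) (join_vars (Zero A n) (undup J))).
split.
  move=> e ->; left; exists (undup I), (undup J), (c `\` d); split=> //.
  by rewrite hJ.
by move=> v; rewrite hold_iff solves1 sat_ineq eval_join_vars /= joinx0 jn_undup.
Qed.

Lemma reduce m : forall I cs G J ds D, (msr G D <= m)%N -> Cs cs -> Cs ds ->
  CT G -> CT D -> (I != [::]) || (cs != [::]) || ~~ nilp G ->
  Good (fun v => holds v I cs G J ds D).
Proof.
have hL : forall v I cs G a b, b <= a -> LB v I cs G a -> LB v I cs G b.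
  by move=> v I cs G a b; exact: LB_down.
elim: m => [|m IH] I cs G J ds D hm hcs hds hG hD hne.
  case: G hm hG hne => [|t G] hm hG hne; last first.
    by move: hm; rewrite /msr /=; have := tsize_gt0 t; lia.
  case: D hm hD => [|t D] hm hD; last first.
    by move: hm; rewrite /msr /=; have := tsize_gt0 t; lia.
  by apply: atomic => //; rewrite /= orbF in hne.
case: G hm hG hne => [|t G] hm hG hne.
  case: D hm hD => [|t D] hm hD.
    by apply: atomic => //; rewrite /= orbF in hne.
  move/CT_cons: hD => [ht hD].
  case: t hm ht => [j|d||t1 t2|t1 t2|t1 t2] hm ht.
  - apply: (Good_iff (Q := fun v => holds v I cs [::] (j :: J) ds D)).
      by move=> v; rewrite /holds RJ_cons RJ_var; exact: iff_refl.
    by apply: IH => //; rewrite /msr /= in hm *; lia.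
  - apply: (Good_iff (Q := fun v => holds v I cs [::] J (d :: ds) D)).
      by move=> v; rewrite /holds RJ_cons RJ_const; exact: iff_refl.
    by apply: IH => //; try (rewrite /msr /= in hm *; lia); apply/Cs_cons.
  - apply: (Good_iff (Q := fun v => holds v I cs [::] J ds D)).
      by move=> v; rewrite /holds RJ_cons /= join0x; exact: iff_refl.
    by apply: IH => //; rewrite /msr /= in hm *; lia.
  - apply: (Good_iff (Q := fun v => holds v I cs [::] J ds (t1 :: t2 :: D))).
      by move=> v; rewrite /holds !RJ_cons /= joinA; exact: iff_refl.
    case: ht => h1 h2.
    apply: IH => //; first by rewrite /msr /= in hm *; lia.
    by apply/CT_cons; split=> //; apply/CT_cons.
  - apply: (Good_iff (Q := fun v => holds v I cs [::] J ds (t1 :: D) /\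
                                   holds v I cs [::] J ds (t2 :: D))).
      move=> v; rewrite /holds !RJ_cons.
      exact: (@rule_rmeet _ _ (fun a => LB v I cs [::] a) (eval v t1) (eval v t2)).
    case: ht => h1 h2.
    by apply: Good_and; apply: IH => //; try (rewrite /msr /= in hm *; lia);
       apply/CT_cons.
  - apply: (Good_iff (Q := fun v => holds v I cs [::] J ds (t1 :: D) /\
                                   holds v I cs [:: t2] J ds D)).
      move=> v; rewrite holds_consL /holds !RJ_cons.
      exact: (@rule_rdiff _ _ (fun a => LB v I cs [::] a) (hL v I cs [::]) (eval v t1) (eval v t2)).
    case: ht => h1 h2.
    apply: Good_and; apply: IH => //; try (rewrite /msr /= in hm *; lia).
    all: try by apply/CT_cons.
    all: try by rewrite /= orbT.
move/CT_cons: hG => [ht hG].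
case: t hm ht hne => [i|c||t1 t2|t1 t2|t1 t2] hm ht hne.
- apply: (Good_iff (Q := fun v => holds v (i :: I) cs G J ds D)).
    by move=> v; split=> H a h; apply: H; rewrite ?LB_cons ?LB_var in h *.
  by apply: IH => //; rewrite /msr /= in hm *; lia.
- apply: (Good_iff (Q := fun v => holds v I (c :: cs) G J ds D)).
    by move=> v; split=> H a h; apply: H; rewrite ?LB_cons ?LB_const in h *.
  by apply: IH => //; try (rewrite /msr /= in hm *; lia); apply/Cs_cons.
- apply: Good_true => v a; rewrite LB_cons => /andP[h _].
  have : a <= \bot := h.
  by rewrite lex0 => /eqP ->; exact: le0x.
- apply: (Good_iff (Q := fun v => holds v I cs (t1 :: G) J ds D /\
                                 holds v I cs (t2 :: G) J ds D)).
    move=> v; rewrite !holds_consL.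
    exact: (@rule_ljoin _ _ (fun a => LB v I cs G a) (hL v I cs G) (eval v t1) (eval v t2)).
  case: ht => h1 h2.
  by apply: Good_and; apply: IH => //; try (rewrite /msr /= in hm *; lia);
     first [by apply/CT_cons | by rewrite /= orbT].
- apply: (Good_iff (Q := fun v => holds v I cs (t1 :: t2 :: G) J ds D)).
    move=> v; split=> H a h; apply: H; rewrite !LB_cons in h *.
    + by rewrite /= lexI -andbA.
    + by move: h; rewrite /= lexI -andbA.
  case: ht => h1 h2.
  apply: IH => //; first by rewrite /msr /= in hm *; lia.
  by apply/CT_cons; split; [exact: h1 | apply/CT_cons; split].
- apply: (Good_iff (Q := fun v => holds v I cs (t1 :: G) J ds (t2 :: D))).
    move=> v; rewrite !holds_consL RJ_cons.
    exact: (@rule_ldiff _ _ (fun a => LB v I cs G a) (hL v I cs G) (eval v t1) (eval v t2)).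
  case: ht => h1 h2.
  apply: IH => //; first by rewrite /msr /= in hm *; lia.
  all: try by apply/CT_cons.
  all: try by rewrite /= orbT.
Qed.

Lemma hold1 v t s : holds v [::] [::] [:: t] [::] [::] [:: s] <-> eval v t <= eval v s.
Proof.
rewrite holds_consL /RJ /= joinx0.
by split=> [H|H a _ h]; [exact: H _ isT (lexx _) | exact: le_trans h H].
Qed.

Lemma main_sec (S : system A n) (hS : forall e, S e -> eqn_in_L C e) :
  exists S' : system A n,
    (forall e, S' e -> normal_eqn C e) /\ equivalent_systems S S'.
Proof.
exists (fun e => normal_eqn C e /\ (forall v, solves v S -> satisfies v e)); split.
  by move=> e [].
move=> v; split.
  by move=> hv e [_ He]; exact: He v hv.
move=> hv [t s] He0.
have [ht hs] := hS _ He0.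
have hCt : CT [:: t] by apply/CT_cons; split=> // u [].
have hCs : CT [:: s] by apply/CT_cons; split=> // u [].
have G1 : Good (fun v => holds v [::] [::] [:: t] [::] [::] [:: s] /\
                         holds v [::] [::] [:: s] [::] [::] [:: t]).
  by apply: Good_and; apply: (@reduce (msr _ _)).
have [N [hN hNs]] : Good (fun v => satisfies v (t, s)).
  apply: Good_iff G1 => w; rewrite !hold1 /satisfies /=; split.
    by move=> ->; rewrite lexx.
  by move=> [h1 h2]; apply: le_anti; rewrite h1 h2.
apply/hNs => e He; apply: hv; split; first exact: hN.
by move=> w hw; move/hNs: (hw _ He0); apply.
Qed.
End Main.

Theorem mainTheorem5 (disp : Order.disp_t) (A : cbDistrLatticeType disp)
    (C : A -> Prop) (hC : ershov_subalgebra C) (n : nat)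
    (S : system A n) (hS : forall e, S e -> eqn_in_L C e) :
  exists S' : system A n,
    (forall e, S' e -> normal_eqn C e) /\ equivalent_systems S S'.
Proof. exact: main_sec. Qed.
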